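(* Let $A\subseteq B$ be an $m$-extension (under the standing assumptions below). Then for all $\theta,\zeta\in\mathrm{Con}(A)$: $[\theta,\zeta]_A=\Delta_A$ iff $[Cg_B(\theta),Cg_B(\zeta)]_B=\Delta_B$.
   Context: For an algebra $M$ of a fixed signature: $\mathrm{Con}(M)$ is its congruence lattice with bottom $\Delta_M$ and top $\nabla_M=M^2$; $Cg_M(X)$ is the congruence generated by $X\subseteq M^2$. $[\cdot,\cdot]_M$ is the term condition commutator: for $\alpha,\beta,\mu\in\mathrm{Con}(M)$, $C(\alpha,\beta;\mu)$ means that for all $n,k$, every $(n+k)$-ary term $t$, all $(a_i,b_i)\in\alpha$ and $(c_j,d_j)\in\beta$: $(t(\bar a,\bar c),t(\bar a,\bar d))\in\mu$ iff $(t(\bar b,\bar c),t(\bar b,\bar d))\in\mu$; $[\alpha,\beta]_M=\bigcap\{\mu: C(\alpha,\beta;\mu)\}$. A congruence $\phi\neq\nabla_M$ is prime if $[\alpha,\beta]_M\subseteq\phi$ implies $\alpha\subseteq\phi$ or $\beta\subseteq\phi$; $\mathrm{Spec}(M)$ is the set of primes, $\mathrm{Min}(M)$ its minimal elements; $\rho_M(\theta)$ is the intersection of all primes containing $\theta$ ($\nabla_M$ if none); $M$ is semiprime if $\rho_M(\Delta_M)=\Delta_M$. Standing assumptions: $B$ is an algebra, $A$ is a subalgebra of $B$, $A$ and $B$ are semiprime, and the commutators of $A$ and $B$ are commutative and distributive w.r.t. arbitrary joins (i.e. $[\alpha,\beta]=[\beta,\alpha]$ and $[\bigvee_i\alpha_i,\beta]=\bigvee_i[\alpha_i,\beta]$).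 The extension $A\subseteq B$ is an $m$-extension iff $\mu\cap\nabla_A\in\mathrm{Min}(A)$ for all $\mu\in\mathrm{Min}(B)$. *)

(* Defs.v *)
From mathcomp Require Import all_boot.
Set Implicit Arguments. Unset Strict Implicit. Unset Printing Implicit Defensive.

Section UA.
Variables (F : Type) (ar : F -> nat).

Definition ops (T : Type) := forall f : F, ('I_(ar f) -> T) -> T.
Arguments ops : clear implicits.

Definition relT (T : Type) := T -> T -> Prop.
Definition subrel {T} (r s : relT T) := forall x y, r x y -> s x y.
Definition releq {T} (r s : relT T) := forall x y, r x y <-> s x y.
Definition Delta (T : Type) : relT T := fun x y => x = y.
Definition Nabla (T : Type) : relT T := fun _ _ => True.

Section Alg.
Variables (T : Type) (op : ops T).

Definition is_con (th : relT T) :=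
  [/\ (forall x, th x x), (forall x y, th x y -> th y x),
      (forall x y z, th x y -> th y z -> th x z)
    & (forall f (a b : 'I_(ar f) -> T), (forall i, th (a i) (b i)) ->
         th (@op f a) (@op f b))].

Definition Cg (X : relT T) : relT T :=
  fun x y => forall th, is_con th -> subrel X th -> th x y.

Definition bigjoin (I : Type) (al : I -> relT T) : relT T :=
  Cg (fun x y => exists i, al i x y).

Inductive term (V : Type) : Type :=
| Var : V -> term V
| App : forall f : F, ('I_(ar f) -> term V) -> term V.

Fixpoint eval (V : Type) (env : V -> T) (t : term V) : T :=
  match t with
  | Var v => env v
  | App f args => @op f (fun i => eval env (args i))
  end.

Definition env2 n k (a : 'I_n -> T) (c : 'I_k -> T) : 'I_n + 'I_k -> T :=
  fun v => match v with inl i => a i | inr j => c j end.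

Definition TC (al be mu : relT T) :=
  forall (n k : nat) (t : term ('I_n + 'I_k)) (a b : 'I_n -> T) (c d : 'I_k -> T),
    (forall i, al (a i) (b i)) -> (forall j, be (c j) (d j)) ->
    (mu (eval (env2 a c) t) (eval (env2 a d) t) <->
     mu (eval (env2 b c) t) (eval (env2 b d) t)).

Definition comm (al be : relT T) : relT T :=
  fun x y => forall mu, is_con mu -> TC al be mu -> mu x y.

Definition prime (phi : relT T) :=
  [/\ is_con phi, ~ releq phi (@Nabla T)
    & forall al be, is_con al -> is_con be ->
        subrel (comm al be) phi -> subrel al phi \/ subrel be phi].

Definition minprime (phi : relT T) :=
  prime phi /\ forall psi, prime psi -> subrel psi phi -> releq psi phi.

Definition rho (th : relT T) : relT T :=
  fun x y => forall phi, prime phi -> subrel th phi -> phi x y.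

Definition semiprime := releq (rho (@Delta T)) (@Delta T).

Definition comm_commutative :=
  forall al be, is_con al -> is_con be -> releq (comm al be) (comm be al).

Definition comm_distributive :=
  forall (I : Type) (al : I -> relT T) be,
    (forall i, is_con (al i)) -> is_con be ->
    releq (comm (bigjoin al) be) (bigjoin (fun i => comm (al i) be)).
End Alg.

Definition sub_closed (B : Type) (opB : ops B) (S : B -> Prop) :=
  forall f (a : 'I_(ar f) -> B), (forall i, S (a i)) -> S (opB f a).

Definition subop (B : Type) (opB : ops B) (S : B -> Prop)
  (HS : sub_closed opB S) : ops {x : B | S x} :=
  fun f a => exist S (opB f (fun i => proj1_sig (a i)))
                     (HS f _ (fun i => proj2_sig (a i))).

Definition img (B : Type) (S : B -> Prop) (th : relT {x : B | S x}) : relT B :=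
  fun x y => exists (x' y' : {x : B | S x}),
    th x' y' /\ x = proj1_sig x' /\ y = proj1_sig y'.

Definition restr (B : Type) (S : B -> Prop) (mu : relT B) : relT {x : B | S x} :=
  fun x y => mu (proj1_sig x) (proj1_sig y).

Definition m_extension (B : Type) (opB : ops B) (S : B -> Prop)
  (HS : sub_closed opB S) :=
  forall mu, minprime opB mu -> minprime (subop HS) (@restr B S mu).
End UA.

(* Main.v *)
Require Import Defs.
From mathcomp Require Import all_boot.
From mathcomp Require Import boolp classical_sets.
From Stdlib Require Import Classical.
Require Import Defs.
Set Implicit Arguments. Unset Strict Implicit.

Section H.
Variables (F : Type) (ar : F -> nat) (T : Type) (op : ops ar T).

Lemma eval_con (th : relT T) V (e1 e2 : V -> T) (t : term ar V) :
  is_con op th -> (forall v, th (e1 v) (e2 v)) ->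
  th (eval op e1 t) (eval op e2 t).
Proof.
move=> [r s tr c] H; elim: t => [v|f args IH] /=; first exact: H.
by apply: c => i; apply: IH.
Qed.

Lemma comm_sub_l al be : is_con op al -> is_con op be -> subrel (comm op al be) al.
Proof.
move=> Ha Hb x y /(_ al Ha); apply => n k t a b c d Hab Hcd.
have E1 : al (eval op (env2 a c) t) (eval op (env2 b c) t).
  apply: eval_con => // -[i|j] /=; first exact: Hab.
  by case: Ha.
have E2 : al (eval op (env2 a d) t) (eval op (env2 b d) t).
  apply: eval_con => // -[i|j] /=; first exact: Hab.
  by case: Ha.
case: Ha => Rr Rs Rt _; split => H.
- by eapply Rt; [apply: Rs E1|eapply Rt; [apply: H|exact: E2]].
- by eapply Rt; [exact: E1|eapply Rt; [apply: H|apply: Rs E2]].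
Qed.

Lemma comm_sub_r al be : is_con op al -> is_con op be -> subrel (comm op al be) be.
Proof.
move=> Ha Hb x y /(_ be Hb); apply => n k t a b c d Hab Hcd.
have E : forall a', be (eval op (env2 a' c) t) (eval op (env2 a' d) t).
  move=> a'; apply: eval_con => // -[i|j] /=; last exact: Hcd.
  by case: Hb.
by split => _; apply: E.
Qed.

Lemma delta_comm al be : subrel (@Delta T) (comm op al be).
Proof. by move=> x y -> mu [r _ _ _] _; apply: r. Qed.

Lemma core_lemma al be : semiprime op -> is_con op al -> is_con op be ->
  releq (comm op al be) (@Delta T) -> forall x y, al x y -> be x y -> x = y.
Proof.
move=> sp Ha Hb Hc x y Hx Hy; apply/sp => phi [Hp Hn Hpr] _.
have [] := Hpr al be Ha Hb.
- move=> u v /Hc ->; by case: Hp.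
- by move=> /(_ x y Hx).
- by move=> /(_ x y Hy).
Qed.

Lemma conv_lemma al be : is_con op al -> is_con op be ->
  (forall x y, al x y -> be x y -> x = y) -> releq (comm op al be) (@Delta T).
Proof.
move=> Ha Hb H x y; split; last exact: delta_comm.
move=> Hc; apply: H; [exact: comm_sub_l Hc | exact: comm_sub_r Hc].
Qed.

Lemma inter_con (P : relT T -> Prop) : (forall p, P p -> is_con op p) ->
  is_con op (fun x y => forall p, P p -> p x y).
Proof.
move=> H; split.
- by move=> x p /H [].
- by move=> x y Hxy p Pp; case: (H p Pp) => _ s _ _; apply: s; apply: Hxy.
- by move=> x y z H1 H2 p Pp; case: (H p Pp) => _ _ t _; apply: t (H1 _ Pp) (H2 _ Pp).
- by move=> f a b Hab p Pp; case: (H p Pp) => _ _ _ c; apply: c => i; apply: Hab.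
Qed.

Lemma Cg_con X : is_con op (Cg op X).
Proof.
split.
- by move=> x th [r _ _ _] _; apply: r.
- by move=> x y Hxy th Hth HX; case: (Hth) => _ s _ _; apply: s; apply: Hxy.
- by move=> x y z H1 H2 th Hth HX; case: (Hth) => _ _ t _; apply: t (H1 _ Hth HX) (H2 _ Hth HX).
- by move=> f a b Hab th Hth HX; case: (Hth) => _ _ _ c; apply: c => i; apply: Hab.
Qed.

Lemma Cg_sub X : subrel X (Cg op X).
Proof. by move=> x y H th _ HX; apply: HX. Qed.

Lemma not_sub_inter (P : relT T -> Prop) (al : relT T) :
  ~ subrel al (fun x y => forall p, P p -> p x y) -> exists p, P p /\ ~ subrel al p.
Proof.
move=> H; apply: NNPP => H2; apply: H => x y Hxy p Pp.
apply: NNPP => Hn; apply: H2; exists p; split => // Hs; apply: Hn; exact: Hs.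
Qed.

Lemma exists_minprime phi0 : Defs.prime op phi0 ->
  exists mu, minprime op mu /\ subrel mu phi0.
Proof.
move=> P0.
pose Ty := {p : relT T | Defs.prime op p /\ subrel p phi0}.
pose R : rel Ty := fun x y => `[< subrel (sval y) (sval x) >].
have t0 : Ty := exist _ phi0 (conj P0 (fun x y h => h)).
have [|||m Hm] := @ZL_preorder Ty t0 R.
- by move=> t; apply/asboolP => x y.
- move=> r s t /asboolP H1 /asboolP H2; apply/asboolP => x y h.
  exact: H1 _ _ (H2 _ _ h).
- move=> A Atot.
  pose Pm := fun p => p = phi0 \/ exists s, A s /\ sval s = p.
  have PmP : forall p, Pm p -> Defs.prime op p /\ subrel p phi0.
    move=> p [->|[s [_ <-]]]; first by split.
    exact: (svalP s).
  have Pcmp : forall p q, Pm p -> Pm q -> subrel p q \/ subrel q p.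
    move=> p q Hp Hq; case: Hp => [Ep|[s [As Es]]].
      by right; rewrite Ep; exact: (proj2 (PmP q Hq)).
    case: Hq => [Eq|[s' [As' Es']]].
      by left; rewrite Eq; exact: (proj2 (PmP p (or_intror (ex_intro _ s (conj As Es))))).
    case: (Atot s s' As As') => /asboolP H; rewrite -Es -Es'; [right|left]; exact: H.
  pose tr := fun x y => forall p, Pm p -> p x y.
  have trcon : is_con op tr.
    by apply: inter_con => p /PmP [[]].
  have trsub : subrel tr phi0 by move=> x y H; apply: H; left.
  have trP : Defs.prime op tr.
    split => //.
      move=> Hn; case: P0 => _ N0 _; apply: N0 => x y; split => // _.
      by apply: trsub; apply/Hn.
    move=> al be Ha Hb Hc; apply: NNPP => Hnot.
    have [Na Nb] := not_or_and _ _ Hnot.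
    have [p [Pp Np]] := not_sub_inter Na.
    have [q [Pq Nq]] := not_sub_inter Nb.
    have key : forall p, Pm p -> ~ subrel al p -> ~ subrel be p -> False.
      move=> r Pr N1 N2; have [[_ _ Hr] _] := PmP r Pr.
      have Hsub : subrel (comm op al be) r by move=> x y /Hc; apply.
      by case: (Hr al be Ha Hb Hsub).
    case: (Pcmp p q Pp Pq) => Hpq.
    + apply: (key p Pp Np) => Hbe; apply: Nq => x y /Hbe; exact: Hpq.
    + apply: (key q Pq) => // Hal; apply: Np => x y /Hal; exact: Hpq.
  exists (exist _ tr (conj trP trsub)) => s As; apply/asboolP => x y H.
  by apply: H; right; exists s.
- exists (sval m); have [Pm Sm] := svalP m; split => //; split => // psi Ppsi Hsub.
  have Ss : subrel psi phi0 by move=> x y /Hsub; apply: Sm.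
  have := Hm (exist _ psi (conj Ppsi Ss)).
  have -> : R m (exist _ psi (conj Ppsi Ss)) by apply/asboolP.
  move=> /(_ isT) /asboolP /= H x y; split; [exact: Hsub | exact: H].
Qed.
End H.
Theorem mainTheorem15 (F : Type) (ar : F -> nat) (B : Type) (opB : ops ar B)
  (S : B -> Prop) (HS : sub_closed opB S) :
  semiprime (subop HS) -> semiprime opB ->
  comm_commutative (subop HS) -> comm_distributive (subop HS) ->
  comm_commutative opB -> comm_distributive opB ->
  m_extension HS ->
  forall theta zeta : relT {x : B | S x},
    is_con (subop HS) theta -> is_con (subop HS) zeta ->
    (releq (comm (subop HS) theta zeta) (@Delta _) <->
     releq (comm opB (Cg opB (img theta)) (Cg opB (img zeta))) (@Delta B)).
Proof.
move=> spA spB _ _ _ _ mext theta zeta Ht Hz; split => H.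
- apply: conv_lemma; [exact: Cg_con | exact: Cg_con |].
  move=> x y H1 H2; apply: (proj1 (spB x y)) => phi Pphi _.
  have [mu [Mmu Smu]] := exists_minprime Pphi.
  have [[_ _ Pr] _] := mext mu Mmu.
  have muC : is_con opB mu by case: Mmu => [[]].
  have Hsub : subrel (comm (subop HS) theta zeta) (restr mu).
    by move=> u v /H ->; case: muC => r _ _ _; apply: r.
  case: (Pr theta zeta Ht Hz Hsub) => Hs; apply: Smu.
  + apply: H1 => // u v [x' [y' [Hxy [-> ->]]]]; exact: Hs _ _ Hxy.
  + apply: H2 => // u v [x' [y' [Hxy [-> ->]]]]; exact: Hs _ _ Hxy.
- have core := core_lemma spB (Cg_con _ _) (Cg_con _ _) H.
  apply: conv_lemma => // x y H1 H2.
  have E : proj1_sig x = proj1_sig y.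
    apply: core; apply: Cg_sub; exists x, y; split => //.
  destruct x as [x px], y as [y py]; simpl in E; subst y.
  by rewrite (proof_irrelevance _ px py).
Qed.
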